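(* Fix a constant $d\ge 0$. There is a routing labeling scheme for the family of rooted trees on $n$ nodes of depth at most $d$ with labels of length $\log n+\mathcal{O}(\log\log n)$ bits. The constant in the $\mathcal{O}(\cdot)$ may depend on $d$.
   Context: All logarithms are base $2$. The depth of a rooted tree is the maximum number of edges on a path from the root to a node. A (designer-port) routing labeling scheme for a family $\mathcal{T}$ of rooted trees consists of an encoder and a decoder. - The encoder is given $T\in\mathcal{T}$. It assigns a binary string (label) $\ell(u)$ to every node $u$. It also labels the edges from each node $u$ to its $\deg(u)$ children with distinct port numbers from $\{1,\dots,\deg(u)\}$; the encoder is free to choose these port numbers. - The decoder receives only $\ell(u)$ and $\ell(w)$ for nodes $u\neq w$ of some $T\in\mathcal{T}$; the value $\lceil\log n\rceil$, where $n=|T|$, may also be assumed known. It must return $0$ if the next node on the path from $u$ to $w$ is the parent of $u$. Otherwise it must return the port number of the first edge on that path. - The length of the scheme is the maximum label length over all trees in $\mathcal{T}$ and all their nodes. *)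

(* Defs.v *)
From Stdlib Require Import Reals Arith List.
Import ListNotations.
Open Scope R_scope.

Definition log2R (x : R) : R := ln x / ln 2.

(** A rooted tree on n nodes: nodes are 0..n-1, root r, parent function par
    with par r = r (convention), par maps nodes to nodes, and every node reaches
    the root by iterating par. *)
Definition is_rooted_tree (n r : nat) (par : nat -> nat) : Prop :=
  (r < n)%nat /\ par r = r /\
  (forall u, (u < n)%nat -> (par u < n)%nat) /\
  (forall u, (u < n)%nat -> exists k, Nat.iter k par u = r).

Definition depth_le (d n r : nat) (par : nat -> nat) : Prop :=
  forall u, (u < n)%nat -> exists k, (k <= d)%nat /\ Nat.iter k par u = r.

Definition is_child (n r : nat) (par : nat -> nat) (u v : nat) : Prop :=
  (v < n)%nat /\ v <> r /\ par v = u.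

Definition deg (n r : nat) (par : nat -> nat) (u : nat) : nat :=
  length (filter (fun v => andb (negb (Nat.eqb v r)) (Nat.eqb (par v) u)) (seq 0 n)).

Definition valid_ports (n r : nat) (par : nat -> nat) (port : nat -> nat -> nat) : Prop :=
  forall u, (u < n)%nat ->
    (forall v, is_child n r par u v -> (1 <= port u v <= deg n r par u)%nat) /\
    (forall v1 v2, is_child n r par u v1 -> is_child n r par u v2 ->
        port u v1 = port u v2 -> v1 = v2).

(** If w is a descendant of u, the next node on the path is the child v of u
    that is an ancestor-or-self of w, and the decoder must return port u v;
    otherwise the next node is the parent of u and the decoder must return 0. *)
Definition routing_correct (n r : nat) (par : nat -> nat) (port : nat -> nat -> nat)
    (lab : nat -> list bool) (dec : nat -> list bool -> list bool -> nat) : Prop :=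
  forall u w, (u < n)%nat -> (w < n)%nat -> u <> w ->
    (forall v, is_child n r par u v -> (exists k, Nat.iter k par w = v) ->
        dec (Nat.log2_up n) (lab u) (lab w) = port u v) /\
    ((~ exists k, Nat.iter (S k) par w = u) ->
        dec (Nat.log2_up n) (lab u) (lab w) = 0%nat).

(* Main.v *)
Require Import Defs.
From Stdlib Require Import Reals Arith List Lia Bool Lra.
Import ListNotations.
Local Open Scope nat_scope.

Section Tree.
Variables (n r : nat) (par : nat -> nat) (d : nat).
Hypothesis HT : is_rooted_tree n r par.
Hypothesis HD : depth_le d n r par.

Lemma iter_r k : Nat.iter k par r = r.
Proof. induction k; simpl; auto. rewrite IHk. apply HT. Qed.

Lemma par_lt u : u < n -> par u < n.
Proof. apply HT. Qed.

Lemma iter_lt k u : u < n -> Nat.iter k par u < n.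
Proof. induction k; simpl; auto. intros; apply par_lt; auto. Qed.

Lemma cycle_r u m : u < n -> Nat.iter (S m) par u = u -> u = r.
Proof.
  intros Hu Hc. destruct (HD u Hu) as [j [_ Hj]].
  assert (Ht : forall t, Nat.iter (t * S m) par u = u).
  { induction t; simpl; auto. change (S m + t * S m) with (S m + t * S m).
    rewrite Nat.iter_add, IHt; exact Hc. }
  specialize (Ht j). replace (j * S m) with ((j * S m - j) + j) in Ht by nia.
  rewrite Nat.iter_add, Hj, iter_r in Ht. auto.
Qed.

Definition ancb (x y : nat) : bool :=
  existsb (fun k => Nat.eqb (Nat.iter k par x) y) (seq 0 (S d)).

Lemma ancb_spec x y : x < n -> (ancb x y = true <-> exists k, Nat.iter k par x = y).
Proof.
  intros Hx. unfold ancb. rewrite existsb_exists. split.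
  - intros [k [_ Hk]]. apply Nat.eqb_eq in Hk. eauto.
  - intros [k Hk]. destruct (HD x Hx) as [j [Hjd Hj]].
    destruct (le_lt_dec k d).
    + exists k; split; [apply in_seq; lia| apply Nat.eqb_eq; auto].
    + exists j; split; [apply in_seq; lia| apply Nat.eqb_eq].
      replace k with ((k - j) + j) in Hk by lia. rewrite Nat.iter_add, Hj, iter_r in Hk. congruence.
Qed.

Definition size (u : nat) : nat := length (filter (fun x => ancb x u) (seq 0 n)).

Definition childb (u v : nat) : bool := negb (Nat.eqb v r) && Nat.eqb (par v) u.

Definition beforeb (v' v : nat) : bool :=
  Nat.ltb (size v) (size v') || (Nat.eqb (size v') (size v) && Nat.ltb v' v).

Definition port (u v : nat) : nat :=
  S (length (filter (fun v' => childb u v' && beforeb v' v) (seq 0 n))).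

Lemma filter_le_incl {A} (f g : A -> bool) l :
  (forall x, In x l -> f x = true -> g x = true) -> length (filter f l) <= length (filter g l).
Proof.
  induction l as [|a l IH]; simpl; intros H; auto.
  destruct (f a) eqn:E1; destruct (g a) eqn:E2; simpl.
  - apply le_n_S, IH; auto.
  - rewrite (H a (or_introl eq_refl) E1) in E2; discriminate.
  - constructor. apply IH; auto.
  - apply IH; auto.
Qed.

Lemma filter_lt_incl {A} (f g : A -> bool) l a :
  (forall x, In x l -> f x = true -> g x = true) -> In a l -> g a = true -> f a = false ->
  length (filter f l) < length (filter g l).
Proof.
  induction l as [|b l IH]; simpl; intros H Ha Hg Hf; [contradiction|].
  destruct Ha as [<-|Ha].
  - rewrite Hf, Hg. simpl. apply le_n_S, filter_le_incl; auto.
  - destruct (f b) eqn:E1; destruct (g b) eqn:E2; simpl.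
    + apply le_n_S, IH; auto.
    + rewrite (H b (or_introl eq_refl) E1) in E2; discriminate.
    + apply Nat.lt_lt_succ_r, IH; auto.
    + apply IH; auto.
Qed.

Lemma beforeb_irrefl v : beforeb v v = false.
Proof. unfold beforeb. rewrite Nat.ltb_irrefl, Nat.ltb_irrefl. destruct (_ =? _); auto. Qed.

Lemma beforeb_trans a b c : beforeb a b = true -> beforeb b c = true -> beforeb a c = true.
Proof.
  unfold beforeb. intros H1 H2.
  apply orb_true_iff in H1, H2. apply orb_true_iff.
  rewrite !andb_true_iff, !Nat.ltb_lt, !Nat.eqb_eq in *. lia.
Qed.

Lemma beforeb_total a b : a <> b -> beforeb a b = true \/ beforeb b a = true.
Proof.
  unfold beforeb. intros H. rewrite !orb_true_iff, !andb_true_iff, !Nat.ltb_lt, !Nat.eqb_eq. lia.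
Qed.

Lemma childb_spec u v : is_child n r par u v <-> v < n /\ childb u v = true.
Proof.
  unfold is_child, childb. rewrite andb_true_iff, negb_true_iff, Nat.eqb_neq, Nat.eqb_eq. tauto.
Qed.

Lemma port_range u v : is_child n r par u v -> 1 <= port u v <= deg n r par u.
Proof.
  intros Hc. apply childb_spec in Hc as [Hv Hc]. unfold port, deg. split; [lia|].
  apply (filter_lt_incl _ _ _ v).
  - intros x _ Hx. apply andb_true_iff in Hx as [Hx _]. exact Hx.
  - apply in_seq; lia.
  - exact Hc.
  - rewrite beforeb_irrefl, andb_false_r; auto.
Qed.

Lemma port_inj u v1 v2 : is_child n r par u v1 -> is_child n r par u v2 ->
  port u v1 = port u v2 -> v1 = v2.
Proof.
  intros H1 H2 Hp. destruct (Nat.eq_dec v1 v2) as [|Hne]; auto. exfalso.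
  apply childb_spec in H1 as [Hv1 H1]; apply childb_spec in H2 as [Hv2 H2].
  unfold port in Hp. injection Hp as Hp.
  destruct (beforeb_total _ _ Hne) as [Hb|Hb].
  - assert (length (filter (fun v' => childb u v' && beforeb v' v1) (seq 0 n)) <
            length (filter (fun v' => childb u v' && beforeb v' v2) (seq 0 n))); [|lia].
    apply (filter_lt_incl _ _ _ v1).
    + intros x _ Hx. apply andb_true_iff in Hx as [Hx Hx']. rewrite Hx. simpl. eapply beforeb_trans; eauto.
    + apply in_seq; lia.
    + rewrite H1, Hb; auto.
    + rewrite beforeb_irrefl, andb_false_r; auto.
  - assert (length (filter (fun v' => childb u v' && beforeb v' v2) (seq 0 n)) <
            length (filter (fun v' => childb u v' && beforeb v' v1) (seq 0 n))); [|lia].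
    apply (filter_lt_incl _ _ _ v2).
    + intros x _ Hx. apply andb_true_iff in Hx as [Hx Hx']. rewrite Hx. simpl. eapply beforeb_trans; eauto.
    + apply in_seq; lia.
    + rewrite H2, Hb; auto.
    + rewrite beforeb_irrefl, andb_false_r; auto.
Qed.

Lemma valid : valid_ports n r par port.
Proof. intros u _. split; [apply port_range| apply port_inj]. Qed.


Lemma disjoint_child u v1 v2 x : x < n -> childb u v1 = true -> childb u v2 = true ->
  ancb x v1 = true -> ancb x v2 = true -> v1 = v2.
Proof.
  intros Hx C1 C2 A1 A2.
  apply ancb_spec in A1 as [k1 K1]; auto. apply ancb_spec in A2 as [k2 K2]; auto.
  unfold childb in C1, C2. rewrite andb_true_iff, negb_true_iff, Nat.eqb_neq, Nat.eqb_eq in C1, C2.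
  assert (Hu : u < n). { destruct C1 as [_ <-]. rewrite <- K1. apply par_lt, iter_lt; auto. }
  assert (gen : forall a b ka kb, childb u a = true -> childb u b = true ->
     Nat.iter ka par x = a -> Nat.iter kb par x = b -> ka <= kb -> a = b).
  { clear k1 k2 K1 K2 C1 C2 v1 v2. intros a b ka kb Ca Cb Ka Kb Hle.
    unfold childb in Ca, Cb. rewrite andb_true_iff, negb_true_iff, Nat.eqb_neq, Nat.eqb_eq in Ca, Cb.
    replace kb with ((kb - ka) + ka) in Kb by lia. rewrite Nat.iter_add, Ka in Kb.
    destruct (kb - ka) as [|m] eqn:E; [simpl in Kb; auto|].
    rewrite Nat.iter_succ_r in Kb. destruct Ca as [_ Pa]. rewrite Pa in Kb.
    assert (Nat.iter (S m) par u = u) by (simpl; rewrite Kb; apply Cb).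
    assert (Hur : u = r) by (eapply cycle_r; eauto). rewrite Hur in Kb.
    exfalso. apply (proj1 Cb). rewrite <- Kb. apply iter_r. }
  destruct (le_lt_dec k1 k2).
  - apply (gen v1 v2 k1 k2); auto; unfold childb; rewrite andb_true_iff, negb_true_iff, Nat.eqb_neq, Nat.eqb_eq; auto.
  - symmetry; apply (gen v2 v1 k2 k1); try lia; auto; unfold childb; rewrite andb_true_iff, negb_true_iff, Nat.eqb_neq, Nat.eqb_eq; auto.
Qed.

Fixpoint sumn (l : list nat) : nat := match l with [] => 0 | x :: l' => x + sumn l' end.

Lemma filter_or_len {A} (f g : A -> bool) l :
  (forall x, In x l -> f x = true -> g x = false) ->
  length (filter (fun x => f x || g x) l) = length (filter f l) + length (filter g l).
Proof.
  induction l as [|a l IH]; simpl; intros H; auto.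
  destruct (f a) eqn:E1; destruct (g a) eqn:E2; simpl.
  - rewrite (H a (or_introl eq_refl) E1) in E2; discriminate.
  - rewrite IH; auto.
  - rewrite IH; auto.
  - rewrite IH; auto.
Qed.

Lemma union_len u S : NoDup S -> (forall s, In s S -> childb u s = true) ->
  length (filter (fun x => existsb (fun s => ancb x s) S) (seq 0 n)) = sumn (map size S).
Proof.
  induction S as [|s S IH]; intros ND HS.
  - simpl. induction (seq 0 n); simpl; auto.
  - inversion ND; subst. simpl. rewrite filter_or_len.
    + rewrite IH; auto. intros; apply HS; simpl; auto.
    + intros x Hx A1. apply in_seq in Hx.
      apply not_true_iff_false. intros E. apply existsb_exists in E as [s' [Hs' A2]].
      assert (s = s') by (apply (disjoint_child u s s' x); auto; try lia; apply HS; simpl; auto).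
      subst; contradiction.
Qed.

Lemma sumn_ge S m : (forall s, In s S -> m <= size s) -> length S * m <= sumn (map size S).
Proof.
  induction S; simpl; intros H; auto.
  specialize (IHS (fun s Hs => H s (or_intror Hs))). specialize (H a (or_introl eq_refl)). lia.
Qed.

Lemma port_size u v : is_child n r par u v -> port u v * size v <= size u.
Proof.
  intros Hc. apply childb_spec in Hc as [Hv Hc].
  set (SS := v :: filter (fun v' => childb u v' && beforeb v' v) (seq 0 n)).
  assert (HL : length SS = port u v) by reflexivity.
  assert (ND : NoDup SS).
  { constructor. intros Hin. apply filter_In in Hin as [_ Hin].
    rewrite beforeb_irrefl, andb_false_r in Hin; discriminate.
    apply NoDup_filter, seq_NoDup. }
  assert (HS : forall s, In s SS -> childb u s = true).
  { intros s [<-|Hs]; auto. apply filter_In in Hs as [_ Hs]. apply andb_true_iff in Hs; tauto. }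
  assert (Hge : forall s, In s SS -> size v <= size s).
  { intros s [<-|Hs]; auto. apply filter_In in Hs as [_ Hs]. apply andb_true_iff in Hs as [_ Hs].
    unfold beforeb in Hs. rewrite orb_true_iff, andb_true_iff, Nat.ltb_lt, Nat.eqb_eq in Hs. lia. }
  rewrite <- HL. eapply Nat.le_trans; [apply sumn_ge; exact Hge|].
  rewrite <- (union_len u SS ND HS). unfold size. apply filter_le_incl.
  intros x Hx E. apply in_seq in Hx. apply existsb_exists in E as [s [Hs A]].
  apply ancb_spec in A as [k K]; [|lia]. apply ancb_spec; [lia|]. exists (S k). simpl. rewrite K.
  specialize (HS s Hs). unfold childb in HS. apply andb_true_iff in HS as [_ HS]. apply Nat.eqb_eq; auto.
Qed.

Lemma size_pos x : x < n -> 1 <= size x.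
Proof.
  intros Hx. unfold size. apply (Nat.le_lt_trans _ (length (filter (fun _ => false) (seq 0 n)))); [lia|].
  apply (filter_lt_incl _ _ _ x); auto. intros; discriminate. apply in_seq; lia.
  apply ancb_spec; auto. exists 0; reflexivity.
Qed.

Lemma size_le x : size x <= n.
Proof. unfold size. rewrite <- (length_seq n 0) at 2. apply filter_length_le. Qed.

Fixpoint plf (f w : nat) : list nat :=
  match f with
  | 0 => []
  | S f' => if Nat.eqb w r then [] else plf f' (par w) ++ [port (par w) w]
  end.

Definition pl (w : nat) : list nat := plf d w.

Lemma plf_stable f : forall x g, Nat.iter f par x = r -> f <= g -> plf g x = plf f x.
Proof.
  induction f as [|f IH]; intros x g Hx Hg.
  - simpl in Hx. subst x. destruct g; simpl; auto. rewrite Nat.eqb_refl; auto.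
  - destruct g as [|g]; [lia|]. simpl. destruct (Nat.eqb x r); auto.
    rewrite (IH (par x) g); auto. rewrite <- Nat.iter_succ_r; auto. lia.
Qed.

Lemma pl_r : pl r = [].
Proof. unfold pl. destruct d; simpl; auto. rewrite Nat.eqb_refl; auto. Qed.

Lemma pl_eq x : x < n -> x <> r -> pl x = pl (par x) ++ [port (par x) x].
Proof.
  intros Hx Hr. destruct (HD x Hx) as [k [Hk Kx]].
  destruct k as [|k]; [simpl in Kx; congruence|].
  unfold pl. rewrite (plf_stable (S k)) by auto.
  rewrite Nat.iter_succ_r in Kx. rewrite (plf_stable k (par x) d) by (auto; lia).
  simpl. apply Nat.eqb_neq in Hr. rewrite Hr. auto.
Qed.

Lemma plf_len f x : length (plf f x) <= f.
Proof.
  revert x; induction f; intros x; simpl; auto. destruct (Nat.eqb x r); simpl; [lia|].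
  rewrite length_app. simpl. specialize (IHf (par x)). lia.
Qed.

Lemma pl_len x : length (pl x) <= d.
Proof. apply plf_len. Qed.

Lemma plf_pos f x p : In p (plf f x) -> 1 <= p.
Proof.
  revert x; induction f; intros x; simpl; [tauto|]. destruct (Nat.eqb x r); [simpl; tauto|].
  intros H. apply in_app_or in H as [H|[<-|[]]]; eauto. unfold port; lia.
Qed.

Fixpoint prodn (l : list nat) : nat := match l with [] => 1 | x :: l' => x * prodn l' end.

Lemma prodn_app a b : prodn (a ++ b) = prodn a * prodn b.
Proof. induction a; simpl; lia. Qed.

Lemma pl_prod k : forall x, x < n -> Nat.iter k par x = r -> prodn (pl x) * size x <= size r.
Proof.
  induction k as [|k IH]; intros x Hx K.
  - simpl in K; subst. rewrite pl_r. simpl. lia.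
  - destruct (Nat.eq_dec x r) as [->|Hr]. rewrite pl_r; simpl; lia.
    rewrite pl_eq by auto. rewrite prodn_app. simpl.
    rewrite Nat.iter_succ_r in K. specialize (IH (par x) (par_lt x Hx) K).
    assert (port (par x) x * size x <= size (par x)).
    { apply port_size. split; auto. }
    rewrite Nat.mul_1_r, <- Nat.mul_assoc. eapply Nat.le_trans; [|exact IH].
    apply Nat.mul_le_mono_l; auto.
Qed.

Lemma pl_prod_le x : x < n -> prodn (pl x) <= n.
Proof.
  intros Hx. destruct (HD x Hx) as [k [_ K]]. pose proof (pl_prod k x Hx K).
  pose proof (size_pos x Hx). pose proof (size_le r). nia.
Qed.

Lemma pl_desc k : forall w v, w < n -> Nat.iter k par w = v -> exists t, pl w = pl v ++ t.
Proof.
  induction k as [|k IH]; intros w v Hw K.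
  - simpl in K; subst. exists []. rewrite app_nil_r; auto.
  - destruct (Nat.eq_dec w r) as [->|Hr].
    + rewrite iter_r in K. subst. exists []. rewrite app_nil_r; auto.
    + rewrite Nat.iter_succ_r in K. destruct (IH (par w) v (par_lt w Hw) K) as [t Ht].
      exists (t ++ [port (par w) w]). rewrite pl_eq by auto. rewrite Ht, app_assoc; auto.
Qed.

Lemma pl_nonempty x : x < n -> x <> r -> pl x <> [].
Proof. intros Hx Hr. rewrite pl_eq by auto. destruct (pl (par x)); discriminate. Qed.

Lemma pl_inj k : forall x y, x < n -> y < n -> Nat.iter k par x = r -> pl x = pl y -> x = y.
Proof.
  induction k as [|k IH]; intros x y Hx Hy K E.
  - simpl in K; subst. rewrite pl_r in E.
    destruct (Nat.eq_dec y r); auto. exfalso. apply (pl_nonempty y); auto.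
  - destruct (Nat.eq_dec x r) as [->|Hr].
    + rewrite pl_r in E. destruct (Nat.eq_dec y r); auto. exfalso. apply (pl_nonempty y); auto.
    + destruct (Nat.eq_dec y r) as [->|Hr'].
      * rewrite pl_r in E. exfalso. apply (pl_nonempty x); auto.
      * rewrite (pl_eq x), (pl_eq y) in E by auto. apply app_inj_tail in E as [E1 E2].
        rewrite Nat.iter_succ_r in K.
        assert (par x = par y) by (apply (IH (par x) (par y)); auto using par_lt).
        apply (port_inj (par x)); [split; auto| split; auto| ]. congruence.
Qed.

Lemma pl_prefix_anc k : forall y x t, x < n -> y < n -> Nat.iter k par y = r ->
  pl y = pl x ++ t -> exists j, Nat.iter j par y = x.
Proof.
  induction k as [|k IH]; intros y x t Hx Hy K E.
  - simpl in K; subst. rewrite pl_r in E. symmetry in E. apply app_eq_nil in E as [E _].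
    exists 0. simpl. symmetry. destruct (HD x Hx) as [j [_ J]].
    apply (pl_inj j); auto. rewrite E, pl_r; auto.
  - destruct (list_eq_dec Nat.eq_dec t []) as [->|Ht];
      [|destruct (exists_last Ht) as [t' [a ->]]].
    + exists 0. rewrite app_nil_r in E. symmetry. destruct (HD x Hx) as [j [_ J]].
      apply (pl_inj j); auto.
    + destruct (Nat.eq_dec y r) as [->|Hr].
      * rewrite pl_r in E. apply (f_equal (@length nat)) in E. rewrite !length_app in E. simpl in E. lia.
      * rewrite (pl_eq y) in E by auto. rewrite app_assoc in E. apply app_inj_tail in E. destruct E as [E _].
        rewrite Nat.iter_succ_r in K.
        destruct (IH (par y) x t' Hx (par_lt y Hy) K E) as [j J]. exists (S j).
        rewrite Nat.iter_succ_r; auto.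
Qed.

End Tree.

Fixpoint bits (w v : nat) : list bool :=
  match w with 0 => [] | S w' => Nat.odd v :: bits w' (Nat.div2 v) end.
Fixpoint bval (l : list bool) : nat :=
  match l with [] => 0 | b :: l' => Nat.b2n b + 2 * bval l' end.

Lemma bits_len w v : length (bits w v) = w.
Proof. revert v; induction w; simpl; auto. Qed.

Lemma bits_val w v : v < 2 ^ w -> bval (bits w v) = v.
Proof.
  revert v; induction w; intros v H; simpl in *.
  - lia.
  - rewrite IHw. pose proof (Nat.div2_odd v). lia.
    pose proof (Nat.div2_odd v). destruct (Nat.odd v); simpl in *; lia.
Qed.

Definition enc_entry (W p : nat) : list bool :=
  bits W (Nat.log2 p) ++ bits (Nat.log2 p) (p - 2 ^ Nat.log2 p).

Definition enc (W : nat) (ps : list nat) : list bool := concat (map (enc_entry W) ps).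

Fixpoint parse (fuel W : nat) (l : list bool) : list nat :=
  match fuel with
  | 0 => []
  | S f => match l with
           | [] => []
           | _ => let b := bval (firstn W l) in
                  let l' := skipn W l in
                  (2 ^ b + bval (firstn b l')) :: parse f W (skipn b l')
           end
  end.

Lemma parse_S f W l : l <> [] -> parse (S f) W l =
  (2 ^ bval (firstn W l) + bval (firstn (bval (firstn W l)) (skipn W l)))
    :: parse f W (skipn (bval (firstn W l)) (skipn W l)).
Proof. destruct l; [congruence|reflexivity]. Qed.

Lemma parse_enc W ps f : 1 <= W -> (forall p, In p ps -> 1 <= p /\ Nat.log2 p < 2 ^ W) ->
  length ps <= f -> parse f W (enc W ps) = ps.
Proof.
  intros HW; revert f; induction ps as [|p ps IH]; intros f Hp Hf.
  - destruct f; reflexivity.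
  - destruct f as [|f]; [simpl in Hf; lia|].
    destruct (Hp p (or_introl eq_refl)) as [H1 H2].
    pose proof (Nat.log2_spec p H1) as [S1 S2].
    unfold enc; simpl map; simpl concat. unfold enc_entry.
    set (b := Nat.log2 p).
    rewrite <- app_assoc.
    rewrite parse_S by (destruct W; [lia|]; simpl; discriminate).
    rewrite firstn_app, skipn_app, bits_len, Nat.sub_diag, firstn_O, app_nil_r, firstn_all2 by (rewrite bits_len; lia).
    rewrite skipn_all2 by (rewrite bits_len; lia). simpl app.
    rewrite bits_val by exact H2.
    rewrite firstn_app, skipn_app, bits_len, Nat.sub_diag, firstn_O, app_nil_r, firstn_all2 by (rewrite bits_len; lia).
    rewrite skipn_all2 by (rewrite bits_len; lia). simpl app.
    rewrite bits_val by (simpl in S2; fold b in S1, S2; lia).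
    f_equal. fold b in S1. lia.
    apply IH. intros; apply Hp; now right. simpl in Hf; lia.
Qed.


Lemma enc_len W ps : length (enc W ps) = W * length ps + sumn (map Nat.log2 ps).
Proof.
  induction ps; [simpl; lia|]. unfold enc in *. cbn [map concat length sumn].
  rewrite length_app, IHps.
  unfold enc_entry. rewrite length_app, !bits_len. lia.
Qed.

Lemma sum_log2_le ps : (forall p, In p ps -> 1 <= p) -> sumn (map Nat.log2 ps) <= Nat.log2 (prodn ps).
Proof.
  induction ps as [|p ps IH]; simpl; intros H; auto.
  assert (1 <= prodn ps).
  { clear IH. induction ps; simpl; auto. assert (1 <= a) by (apply H; simpl; auto).
    assert (1 <= prodn ps) by (apply IHps; intros; apply H; simpl in *; tauto). nia. }
  pose proof (IH (fun q Hq => H _ (or_intror Hq))).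
  pose proof (Nat.log2_mul_below p (prodn ps)). specialize (H p (or_introl eq_refl)). lia.
Qed.

Lemma le_prodn l p : (forall q, In q l -> 1 <= q) -> In p l -> p <= prodn l.
Proof.
  induction l as [|a l IH]; simpl; intros H Hp; [tauto|].
  assert (1 <= prodn l).
  { clear IH Hp. induction l; simpl; auto. assert (1 <= a0) by (apply H; simpl; auto).
    assert (1 <= prodn l) by (apply IHl; intros; apply H; simpl in *; tauto). nia. }
  destruct Hp as [<-|Hp]; [nia|]. specialize (IH (fun q Hq => H q (or_intror Hq)) Hp).
  specialize (H a (or_introl eq_refl)). nia.
Qed.

Definition dec (L : nat) (lu lw : list bool) : nat :=
  let W := S (Nat.log2 L) in
  let pu := parse (length lu) W lu in
  let pw := parse (length lw) W lw in
  if Nat.ltb (length pu) (length pw) then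
    if list_eq_dec Nat.eq_dec (firstn (length pu) pw) pu then nth (length pu) pw 0 else 0
  else 0.

Definition lab n r par d (u : nat) : list bool :=
  enc (S (Nat.log2 (Nat.log2_up n))) (pl n r par d u).

Lemma lab_decode n r par d : is_rooted_tree n r par -> depth_le d n r par ->
  forall x, x < n ->
  parse (length (lab n r par d x)) (S (Nat.log2 (Nat.log2_up n))) (lab n r par d x) = pl n r par d x.
Proof.
  intros HT HD x Hx. unfold lab. apply parse_enc; [lia| |].
  - intros p Hp. split; [eapply plf_pos; eauto|].
    assert (p <= n).
    { eapply Nat.le_trans; [|apply (pl_prod_le n r par d HT HD x Hx)].
      apply le_prodn; auto. intros; eapply plf_pos; eauto. }
    set (L := Nat.log2_up n).
    assert (Nat.log2 p <= L).
    { eapply Nat.le_trans; [apply Nat.log2_le_mono; eauto|]. apply Nat.le_log2_log2_up. }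
    assert (L < 2 ^ S (Nat.log2 L)).
    { destruct L as [|L']; [simpl; lia|]. apply Nat.log2_spec; lia. }
    lia.
  - rewrite enc_len. nia.
Qed.

Lemma routing n r par d : is_rooted_tree n r par -> depth_le d n r par ->
  routing_correct n r par (port n r par d) (lab n r par d) dec.
Proof.
  intros HT HD u w Hu Hw Huw. unfold dec.
  rewrite !lab_decode by auto.
  split.
  - intros v Hc [k K]. destruct Hc as [Hv [Hvr Hpv]].
    destruct (pl_desc n r par d HT HD k w v Hw K) as [t Ht].
    rewrite (pl_eq n r par d HD v Hv Hvr), Hpv in Ht.
    rewrite Ht. rewrite <- app_assoc. simpl.
    rewrite length_app. simpl.
    replace (Nat.ltb _ _) with true by (symmetry; apply Nat.ltb_lt; lia).
    rewrite firstn_app, Nat.sub_diag, firstn_O, app_nil_r, firstn_all.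
    destruct (list_eq_dec Nat.eq_dec _ _) as [_|C]; [|congruence].
    rewrite app_nth2 by lia. rewrite Nat.sub_diag. reflexivity.
  - intros Hn.
    destruct (Nat.ltb _ _) eqn:E1; auto.
    destruct (list_eq_dec Nat.eq_dec _ _) as [E2|]; auto.
    exfalso. apply Nat.ltb_lt in E1.
    set (pu := pl n r par d u) in *. set (pw := pl n r par d w) in *.
    assert (Ew : pw = pu ++ skipn (length pu) pw) by (rewrite <- (firstn_skipn (length pu) pw) at 1; rewrite E2; reflexivity).
    destruct (HD w Hw) as [kw [_ Kw]].
    destruct (pl_prefix_anc n r par d HT HD kw w u _ Hu Hw Kw Ew) as [j J].
    destruct j as [|j]; [simpl in J; congruence|]. apply Hn; eauto.
Qed.

Lemma lab_len n r par d : is_rooted_tree n r par -> depth_le d n r par ->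
  forall x, x < n ->
  length (lab n r par d x) <= d * S (Nat.log2 (Nat.log2_up n)) + Nat.log2 n.
Proof.
  intros HT HD x Hx. unfold lab. rewrite enc_len.
  pose proof (pl_len n r par d x).
  assert (sumn (map Nat.log2 (pl n r par d x)) <= Nat.log2 n).
  { eapply Nat.le_trans; [apply sum_log2_le; intros; eapply plf_pos; eauto|].
    apply Nat.log2_le_mono, (pl_prod_le n r par d HT HD x Hx). }
  nia.
Qed.

Lemma ln2_pos : (0 < ln 2)%R.
Proof. pose proof ln_lt_2. lra. Qed.

Lemma ln_le_mono x y : (0 < x)%R -> (x <= y)%R -> (ln x <= ln y)%R.
Proof.
  intros Hx Hxy. destruct (Rle_lt_or_eq_dec _ _ Hxy) as [H|H].
  - left. apply ln_increasing; auto.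
  - subst; lra.
Qed.

Lemma log2R_mono x y : (0 < x)%R -> (x <= y)%R -> (log2R x <= log2R y)%R.
Proof.
  intros. unfold log2R, Rdiv. apply Rmult_le_compat_r.
  left; apply Rinv_0_lt_compat, ln2_pos. apply ln_le_mono; auto.
Qed.

Lemma log2_INR k : (1 <= k)%nat -> (INR (Nat.log2 k) <= log2R (INR k))%R.
Proof.
  intros Hk. destruct (Nat.log2_spec k) as [H1 _]; [lia|].
  apply le_INR in H1. rewrite pow_INR in H1. simpl INR in H1.
  replace (1+1)%R with 2%R in H1 by lra.
  assert (Hp : (0 < 2 ^ Nat.log2 k)%R) by (apply pow_lt; lra).
  pose proof (ln_le_mono _ _ Hp H1) as H2. rewrite ln_pow in H2 by lra.
  unfold log2R. pose proof ln2_pos.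
  apply (Rmult_le_reg_r (ln 2)); auto. unfold Rdiv. rewrite Rmult_assoc, Rinv_l by lra. lra.
Qed.

Lemma nat_loglog n : (16 <= n)%nat ->
  (S (Nat.log2 (Nat.log2_up n)) <= 2 * Nat.log2 (Nat.log2 n))%nat.
Proof.
  intros Hn. set (m := Nat.log2 n).
  assert (Hm : (4 <= m)%nat) by (change 4%nat with (Nat.log2 16); apply Nat.log2_le_mono; auto).
  assert (HL : (Nat.log2_up n <= S m)%nat) by apply Nat.le_log2_up_succ_log2.
  assert (H2 : (2 <= Nat.log2 m)%nat) by (change 2%nat with (Nat.log2 4); apply Nat.log2_le_mono; auto).
  assert (Nat.log2 (Nat.log2_up n) <= S (Nat.log2 m))%nat.
  { rewrite <- Nat.log2_double by lia. apply Nat.log2_le_mono. lia. }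
  lia.
Qed.

Lemma real_bound n d len : (16 <= n)%nat ->
  (len <= d * S (Nat.log2 (Nat.log2_up n)) + Nat.log2 n)%nat ->
  (INR len <= log2R (INR n) + INR (2 * d) * log2R (log2R (INR n)))%R.
Proof.
  intros Hn Hlen. pose proof (nat_loglog n Hn) as H.
  assert (Hlen' : (len <= 2 * d * Nat.log2 (Nat.log2 n) + Nat.log2 n)%nat) by nia.
  apply le_INR in Hlen'. rewrite plus_INR, mult_INR in Hlen'.
  assert (Hm : (4 <= Nat.log2 n)%nat) by (change 4%nat with (Nat.log2 16); apply Nat.log2_le_mono; auto).
  pose proof (log2_INR n ltac:(lia)) as A.
  pose proof (log2_INR (Nat.log2 n) ltac:(lia)) as B.
  assert (C : (log2R (INR (Nat.log2 n)) <= log2R (log2R (INR n)))%R).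
  { apply log2R_mono; auto. apply lt_0_INR; lia. }
  assert (0 <= INR (2 * d))%R by apply pos_INR.
  assert (INR (2*d) * INR (Nat.log2 (Nat.log2 n)) <= INR (2*d) * log2R (log2R (INR n)))%R.
  { apply Rmult_le_compat_l; auto. lra. }
  lra.
Qed.

Close Scope nat_scope.
Open Scope R_scope.

Theorem mainTheorem6 :
  forall d : nat,
  exists (C : R) (N0 : nat) (dec : nat -> list bool -> list bool -> nat),
  forall (n r : nat) (par : nat -> nat),
    is_rooted_tree n r par -> depth_le d n r par ->
    exists (port : nat -> nat -> nat) (lab : nat -> list bool),
      valid_ports n r par port /\
      routing_correct n r par port lab dec /\
      ((N0 <= n)%nat ->
        forall u, (u < n)%nat ->
          INR (length (lab u)) <= log2R (INR n) + C * log2R (log2R (INR n))).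
Proof.
  intros d. exists (INR (2 * d)), 16%nat, dec.
  intros n r par HT HD. exists (port n r par d), (lab n r par d).
  split; [apply valid|]. split; [apply routing; auto|].
  intros HN u Hu. apply real_bound; auto. apply lab_len; auto.
Qed.
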